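(* Let $n\ge 1$ and $1\le r\le n$. Then for every integer $z$ (equivalently, as a polynomial identity in $z$), $$ \alpha(n;k_1,\ldots,k_{r-1},k_{r}+z,k_{r+1},\ldots,k_n) = \sum_{p=0}^{\infty} (-1)^p \binom{n-1-p+z}{n-1} e_p(E_{k_1},\ldots,\widehat{E_{k_r}},\ldots,E_{k_n}) \, \alpha(n;k_1,\ldots,k_n), $$ where $\widehat{E_{k_r}}$ indicates that $E_{k_r}$ is omitted.
   Context: $E_x$ denotes the shift operator $E_x p(x)=p(x+1)$ acting on polynomials in the variables $k_1,\ldots,k_n$, and $\mathrm{id}$ is the identity. $\alpha(n;k_1,\ldots,k_n)$ is the polynomial $$\alpha(n;k_1,\ldots,k_n)=\prod_{1\le p<q\le n}(\mathrm{id}-E_{k_p}+E_{k_p}E_{k_q})\prod_{1\le i<j\le n}\frac{k_j-k_i}{j-i}$$ (for strictly increasing integers $k_1<\dots<k_n$ it counts monotone triangles with bottom row $(k_1,\ldots,k_n)$). $e_p$ denotes the $p$-th elementary symmetric function ($e_0=1$, $e_p=0$ for $p$ larger than the number of arguments), here evaluated at commuting shift operators. $\binom{x}{m}=x(x-1)\cdots(x-m+1)/m!$. *)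

(* Defs.v *)
From mathcomp Require Import all_boot all_order all_algebra.
Unset Printing Implicit Defensive.
Import Order.TTheory GRing.Theory Num.Theory.
Local Open Scope ring_scope.

(* Functions on integer points Z^n with rational values.  Polynomials in
   k_1..k_n are identified with the functions they induce on Z^n
   (a polynomial is determined by its values there). *)
Definition fn (n : nat) := ('I_n -> int) -> rat.
Definition op (n : nat) := fn n -> fn n.

Definition shift {n} (i : 'I_n) : op n :=
  fun f k => f (fun j => if j == i then k j + 1 else k j).

Definition opprod {n} (s : seq (op n)) : op n :=
  foldr (fun T acc => fun f => T (acc f)) (fun f => f) s.

Definition alpha_factor {n} (p q : 'I_n) : op n :=
  fun f k => f k - shift p f k + shift p (shift q f) k.

Definition vandermonde n : fn n :=
  fun k => \prod_(i < n) \prod_(j < n | (i < j)%N)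
             ((k j - k i)%:~R / (j - i)%:R).

Definition alpha_pairs n : seq ('I_n * 'I_n) :=
  [seq pq : 'I_n * 'I_n <- [seq (p, q) | p <- enum 'I_n, q <- enum 'I_n] | (pq.1 < pq.2)%N].

Definition alpha n : fn n :=
  opprod [seq alpha_factor pq.1 pq.2 | pq : 'I_n * 'I_n <- alpha_pairs n] (vandermonde n).

Definition esym_shift_omit {n} (r : 'I_n) (p : nat) : op n :=
  fun f k => \sum_(S : {set 'I_n} | (r \notin S) && (#|S| == p))
               opprod [seq shift i | i <- enum S] f k.

Definition gbinom (x : rat) (m : nat) : rat :=
  (\prod_(i < m) (x - i%:R)) / (m`!)%:R.

(* Main.v *)
Require Import Defs.
From mathcomp Require Import all_boot all_order all_algebra.
From mathcomp Require Import ring zify perm fingroup.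
From Stdlib Require Import FunctionalExtensionality.
Import Order.TTheory GRing.Theory Num.Theory.
Local Open Scope ring_scope.


Definition Pf (m : nat) (x : rat) : rat := \prod_(i < m) (x - i%:R).

Lemma PfS (m : nat) (x : rat) : Pf m.+1 (x + 1) = (x + 1) * Pf m x.
Proof.
rewrite /Pf big_ord_recl /= subr0; congr (_ * _).
by apply: eq_bigr => i _; rewrite /bump /= -addn1 natrD; ring.
Qed.

Lemma PfSr (m : nat) (x : rat) : Pf m.+1 x = Pf m x * (x - m%:R).
Proof. by rewrite /Pf big_ord_recr. Qed.

Lemma fact_neq0 m : (m`!)%:R != 0 :> rat.
Proof. by rewrite pnatr_eq0 -lt0n fact_gt0. Qed.

Lemma gbinom0 x : gbinom x 0 = 1.
Proof. by rewrite /gbinom big_ord0 fact0 divr1. Qed.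

Lemma gbinomS x m : gbinom (x + 1) m.+1 = gbinom x m.+1 + gbinom x m.
Proof.
rewrite /gbinom -/(Pf _ _) -/(Pf _ _) -/(Pf _ _) PfS PfSr factS natrM.
have h1 := fact_neq0 m.
have h2 : (m.+1)%:R != 0 :> rat by rewrite pnatr_eq0.
rewrite -addn1 natrD in h2 *.
field; by rewrite h1 h2.
Qed.

Lemma gbinom_small (t m : nat) : (t < m)%N -> gbinom t%:R m = 0.
Proof.
move=> ltm; rewrite /gbinom (bigD1 (Ordinal ltm)) //= subrr !mul0r //.
Qed.

Lemma Pf_nn m : Pf m m%:R = m`!%:R.
Proof.
elim: m => [|m IH]; first by rewrite /Pf big_ord0.
rewrite [X in Pf _ X](_ : _ = m%:R + 1) ?PfS ?IH; last by rewrite -addn1 natrD.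
rewrite factS natrM natr1.
reflexivity.
Qed.

Lemma gbinom_nn m : gbinom m%:R m = 1.
Proof. by rewrite /gbinom -/(Pf _ _) Pf_nn divff // fact_neq0. Qed.

Lemma altsum_step N (g : nat -> rat) :
  \sum_(p < N.+2) (-1) ^+ p * 'C(N.+1, p)%:R * g p =
  \sum_(p < N.+1) (-1) ^+ p * 'C(N, p)%:R * (g p - g p.+1).
Proof.
rewrite big_ord_recl /= bin0 expr0 mul1r.
under eq_bigr => i _ do rewrite /bump /= binS natrD mulrDr mulrDl.
rewrite big_split /=.
under [X in _ = X]eq_bigr => i _ do rewrite mulrBr.
rewrite sumrB.
rewrite [in RHS]big_ord_recl [X in _ + (X + _) = _]big_ord_recr /=.
rewrite bin_small // mulr0 mul0r addr0 bin0 expr0 !mul1r.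
rewrite -addrA; congr (_ + (_ + _)).
rewrite -sumrN; apply: eq_bigr => i _; rewrite exprS; ring.
Qed.


Lemma diff_id N m y : (m < N)%N ->
  \sum_(p < N.+1) (-1) ^+ p * 'C(N, p)%:R * gbinom (y - p%:R) m = 0.
Proof.
elim: N m y => [|N IH] m y // ltm.
rewrite (altsum_step N (fun p => gbinom (y - p%:R) m)) /=.
case: m ltm => [|m] ltm.
  by apply: big1 => i _; rewrite !gbinom0 subrr mulr0.
rewrite -[RHS](IH m (y - 1)) //.
apply: eq_bigr => i _; congr (_ * _).
have -> : y - i%:R = (y - 1 - i%:R) + 1 by ring.
rewrite gbinomS -natr1.
have -> : y - (i%:R + 1) = y - 1 - i%:R by ring.
ring.
Qed.

Definition cc (n p : nat) (z : int) : rat :=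
  (-1) ^+ p * gbinom ((n%:Z - 1 - p%:Z + z)%:~R) n.-1.

Lemma binom_id n z : (1 <= n)%N ->
  \sum_(p < n.+1) cc n p z * 'C(n, p.+1)%:R = cc n 0 (z + 1).
Proof.
move=> n1.
have := diff_id n n.-1 ((n%:Z + z)%:~R) (_ : n.-1 < n)%N.
rewrite prednK // => /(_ (leqnn n)) H.
move: H; rewrite big_ord_recl /= bin0 expr0 !mul1r subr0 => /eqP; rewrite addr_eq0 => /eqP H.
rewrite big_ord_recr /= bin_small // mulr0 addr0.
rewrite /cc expr0 mul1r.
have -> : ((n%:Z - 1 - 0%:Z + (z + 1))%:~R : rat) = (n%:Z + z)%:~R by congr intmul; ring.
rewrite H -sumrN; apply: eq_bigr => i _.
rewrite /bump /= exprS.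
have -> : ((n%:Z - 1 - i%:Z + z)%:~R : rat) = (n%:Z + z)%:~R - (1 + i)%:R.
  rewrite !(intrD, intrB) natrD; ring.
ring.
Qed.


Definition ek {n} (k : 'I_n -> int) (i : 'I_n) (c : int) : 'I_n -> int :=
  fun j => if j == i then k j + c else k j.
Definition addS {n} (k : 'I_n -> int) (S : {set 'I_n}) : 'I_n -> int :=
  fun j => if j \in S then k j + 1 else k j.
Definition Pk {n} (g : fn n) := forall k (p : nat),
  \sum_(S : {set 'I_n} | #|S| == p) g (addS k S) = 'C(n, p)%:R * g k.

Lemma opprod_shift n (s : seq 'I_n) (f : fn n) k :
  opprod [seq shift i | i <- s] f k = f (fun j => k j + (count_mem j s)%:Z).
Proof.
elim: s k => [|i s IH] k /=.
  by congr f; apply: functional_extensionality => j; rewrite addr0.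
rewrite /shift IH; congr f; apply: functional_extensionality => j.
case: (eqVneq j i) => [->|ne] /=.
  by rewrite add1n -addn1 PoszD addrAC addrA.
by rewrite add0n.
Qed.

Lemma esym_eval n r p (f : fn n) k :
  esym_shift_omit r p f k =
  \sum_(S : {set 'I_n} | (r \notin S) && (#|S| == p)) f (addS k S).
Proof.
rewrite /esym_shift_omit; apply: eq_bigr => S _; rewrite opprod_shift.
congr f; apply: functional_extensionality => j.
rewrite count_uniq_mem ?enum_uniq // mem_enum /addS; case: (j \in S) => /=; [reflexivity | by rewrite addr0].
Qed.

Lemma ek_addS n (k : 'I_n -> int) S i c : ek (addS k S) i c = addS (ek k i c) S.
Proof.
apply: functional_extensionality => j; rewrite /ek /addS.
by case: (j == i); case: (j \in S) => //; rewrite addrAC.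
Qed.

Lemma shiftE n (i : 'I_n) (g : fn n) x : shift i g x = g (ek x i 1).
Proof. by []. Qed.

Lemma Pk_factor n (p q : 'I_n) (g : fn n) : Pk g -> Pk (alpha_factor p q g).
Proof.
move=> H k m; rewrite /alpha_factor.
under eq_bigr => S _ do rewrite !shiftE !ek_addS.
rewrite big_split /= sumrB !H shiftE shiftE shiftE; ring.
Qed.

Lemma Pk_alpha n : Pk (vandermonde n) -> Pk (alpha n).
Proof.
move=> HV; rewrite /alpha; elim: (alpha_pairs n) => [|pq l IH] //=.
exact: Pk_factor.
Qed.


Definition Mk n (k : 'I_n -> int) : 'M[rat]_n := \matrix_(i, j) gbinom (k i)%:~R j.
Arguments Mk {n}.

Lemma coef_1X n p : ((1 + 'X : {poly rat}) ^+ n)`_p = 'C(n, p)%:R.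
Proof.
rewrite exprDn coef_sum.
under eq_bigr => i _ do rewrite expr1n mul1r coefMn coefXn.
case: (ltnP p n.+1) => hp.
  rewrite (bigD1 (Ordinal hp)) //= eqxx mulr1n big1 ?addr0 // => i ne.
  have pi : p != i by apply: contra ne => /eqP e; apply/eqP/val_inj; rewrite /= e.
  by rewrite (negbTE pi) mul0rn.
rewrite bin_small // big1 // => i _.
have pi : p != i by rewrite neq_ltn (leq_trans (ltn_ord i) hp) orbT.
by rewrite (negbTE pi) mul0rn.
Qed.

Lemma key_to_Pk n (f : {set 'I_n} -> rat) (d : rat) :
  \sum_(S : {set 'I_n}) 'X^#|S| * (f S)%:P = (1 + 'X) ^+ n * d%:P ->
  forall p, \sum_(S : {set 'I_n} | #|S| == p) f S = 'C(n, p)%:R * d.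
Proof.
move=> H p.
have := congr1 (fun q : {poly rat} => q`_p) H => /=.
rewrite coefMC coef_1X coef_sum => <-.
rewrite big_mkcond /=; apply: eq_bigr => S _.
rewrite coefXnM coefC.
case: (ltnP p #|S|) => h.
  by rewrite (_ : (#|S| == p) = false) //; apply/negbTE; rewrite neq_ltn h orbT.
case: eqP => [->|ne]; first by rewrite subnn eqxx.
by rewrite subn_eq0 (_ : (p <= #|S|)%N = false) //; apply/negbTE; rewrite -ltnNge ltn_neqAle h andbT; apply/eqP => e; apply: ne.
Qed.

Definition Bm {n} (k : 'I_n -> int) : 'M[{poly rat}]_n :=
  \matrix_(i, j) ((Mk k i j)%:P + 'X * (gbinom ((k i + 1)%:~R) j)%:P).

Lemma K1 n (k : 'I_n -> int) :
  \det (Bm k) = \sum_(S : {set 'I_n}) 'X^#|S| * (\det (Mk (addS k S)))%:P.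
Proof.
rewrite [LHS]/determinant.
transitivity (\sum_(s : 'S_n) (-1) ^+ s * \sum_(S : {set 'I_n})
   \prod_i (if i \in S then 'X * (gbinom ((k i + 1)%:~R) (s i))%:P
            else (Mk k i (s i))%:P)).
  apply: eq_bigr => s _; congr (_ * _).
  under eq_bigr => i _ do rewrite mxE addrC.
  exact: bigA_distr.
under eq_bigr => s _ do rewrite mulr_sumr.
rewrite exchange_big /=; apply: eq_bigr => S _.
rewrite /determinant rmorph_sum mulr_sumr; apply: eq_bigr => s _.
rewrite rmorphM rmorph_sign rmorph_prod /=.
rewrite (eq_bigr (fun i => (if i \in S then 'X else 1) * (Mk (addS k S) i (s i))%:P)); last first.
  by move=> i _; rewrite !mxE /addS; case: (i \in S); rewrite ?mul1r.
rewrite big_split /= -big_mkcond prodr_const.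
by rewrite mulrCA.
Qed.

Definition Qm n : 'M[{poly rat}]_n :=
  \matrix_(l, j) (if l == j then 1 + 'X else if (l.+1 == j)%N then 'X else 0).

Lemma sum_shift0 n (f : 'I_n -> {poly rat}) (j : 'I_n) : (j : nat) = 0%N ->
  \sum_l f l * ((l.+1 == j)%N)%:R = 0.
Proof. by move=> j0; apply: big1 => l _; rewrite j0 mulr0. Qed.

Lemma sum_shiftS n (f : 'I_n -> {poly rat}) (j : 'I_n) j' (lt : (j' < n)%N) :
  (j : nat) = j'.+1 -> \sum_l f l * ((l.+1 == j)%N)%:R = f (Ordinal lt).
Proof.
move=> jE.
rewrite (bigD1 (Ordinal lt)) //= jE eqxx mulr1 big1 ?addr0 // => l ne.
rewrite eqSS (_ : (l == j' :> nat) = false) ?mulr0 //.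
apply/negbTE; apply: contra ne => /eqP e; apply/eqP/val_inj; by rewrite /= e.
Qed.

Lemma K2 n (k : 'I_n -> int) : Bm k = map_mx polyC (Mk k) *m Qm n.
Proof.
apply/matrixP => i j; rewrite !mxE.
have E : forall l : 'I_n, (Mk k i l)%:P * Qm n l j =
   (Mk k i l)%:P * ((l == j)%:R * (1 + 'X)) + 'X * ((Mk k i l)%:P * ((l.+1 == j)%N)%:R).
  move=> l; rewrite !mxE; case: (eqVneq l j) => [->|ne] /=.
    rewrite gtn_eqF //=; ring.
  by case: (l.+1 == j)%N => /=; ring.
under [RHS]eq_bigr => l _ do rewrite mxE E.
rewrite big_split /= -mulr_sumr (bigD1 j) //= eqxx big1 ?addr0; last first.
  by move=> l ne; rewrite (negbTE ne) mul0r mulr0.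
rewrite !mxE intrD.
have [j0|j0] := posnP j.
  rewrite sum_shift0 // j0 !gbinom0 mulr0 addr0 /=; ring.
have [j' jE] : exists j', (j : nat) = j'.+1 by exists j.-1; rewrite prednK.
have lt : (j' < n)%N by move: (ltn_ord j); rewrite jE; apply: ltnW.
rewrite (@sum_shiftS n (fun l => (Mk k i l)%:P) j j' lt jE) mxE jE gbinomS /=.
rewrite polyCD; ring.
Qed.

Lemma det_Qm n : \det (Qm n) = (1 + 'X) ^+ n.
Proof.
rewrite -det_tr det_trig; last first.
  apply/is_trig_mxP => i j lt; rewrite !mxE.
  have -> : (j == i) = false by apply/eqP => e; move: lt; rewrite e ltnn.
  by rewrite gtn_eqF // ltnS ltnW.
under eq_bigr => i _ do rewrite !mxE eqxx.
by rewrite prodr_const card_ord.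
Qed.

Lemma KEY n (k : 'I_n -> int) :
  \sum_(S : {set 'I_n}) 'X^#|S| * (\det (Mk (addS k S)))%:P =
  (1 + 'X) ^+ n * (\det (Mk k))%:P.
Proof. by rewrite -K1 K2 det_mulmx det_map_mx det_Qm mulrC. Qed.

Lemma Pk_det n : Pk (fun k : 'I_n -> int => \det (Mk k)).
Proof. move=> k p; exact: (@key_to_Pk n _ _ (KEY n k) p). Qed.


Definition ff (j : nat) : {poly rat} := \prod_(0 <= m < j) ('X - (m%:R)%:P).

Lemma size_ff j : size (ff j) = j.+1.
Proof. by rewrite /ff size_prod_XsubC /index_iota subn0 size_iota. Qed.

Lemma monic_ff j : ff j \is monic.
Proof. exact: monic_prod_XsubC. Qed.

Lemma horner_ff j x : (ff j).[x] = Pf j x.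
Proof.
rewrite /ff horner_prod /Pf big_mkord.
by apply: eq_bigr => i _; rewrite hornerXsubC.
Qed.

Lemma prod_sub_fact j : (\prod_(i < j) (j - i))%N = j`!.
Proof.
elim: j => [|j IH]; first by rewrite big_ord0.
by rewrite big_ord_recl subn0 factS -IH.
Qed.

Lemma superfact n :
  \prod_(i < n) \prod_(j < n | (i < j)%N) ((j - i)%N%:R : rat) =
  \prod_(j < n) (j`!)%:R.
Proof.
rewrite (exchange_big_dep xpredT) //=; apply: eq_bigr => j _.
rewrite -natr_prod -prod_sub_fact; congr (_%:R).
rewrite (big_ord_widen_cond n (fun _ => true) (fun i => (j - i)%N)) //; last exact: ltnW.
Qed.

Lemma VD n (k : 'I_n -> int) : vandermonde n k = \det (Mk k).
Proof.
pose x : 'rV[rat]_n := \row_j ((k j)%:~R : rat).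
pose C : 'M[rat]_n := \matrix_(l, j) (ff j)`_l.
have H1 : (Vandermonde n x)^T *m C = Mk k *m diag_mx (\row_j ((j`!)%:R : rat)).
  apply/matrixP => i j; rewrite mul_mx_diag /C !mxE.
  have sz : (size (ff j) <= n)%N by rewrite size_ff.
  transitivity ((ff j).[(k i)%:~R]).
    rewrite (horner_coef_wide _ sz); apply: eq_bigr => l _.
    by rewrite !mxE mulrC.
  by rewrite horner_ff /gbinom divfK // fact_neq0.
have H2 : \det C = 1.
  rewrite -det_tr det_trig; last first.
    by apply/is_trig_mxP => i j lt; rewrite /C !mxE nth_default // size_ff.
  rewrite big1 // => i _.
  rewrite /C !mxE -[X in (ff i)`_X](_ : (size (ff i)).-1 = i); last by rewrite size_ff.
  by rewrite -lead_coefE (monicP (monic_ff i)).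
have H3 := congr1 determinant H1.
rewrite !det_mulmx det_tr H2 mulr1 det_diag det_Vandermonde in H3.
have nz : \prod_(j < n) ((j`!)%:R : rat) != 0.
  by rewrite prodf_seq_neq0; apply/allP => j _; rewrite fact_neq0.
apply: (mulIf nz).
have e : \prod_(i < n) (\row_(j < n) ((j`!)%:R : rat)) 0 i = \prod_(j < n) ((j`!)%:R : rat).
  by apply: eq_bigr => j _; rewrite mxE.
rewrite e in H3.
rewrite -H3 -superfact /vandermonde -big_split /=; apply: eq_bigr => i _.
rewrite -big_split /=; apply: eq_bigr => j lt.
by rewrite !mxE intrB divfK // pnatr_eq0 subn_eq0 -ltnNge.
Qed.

Lemma Pk_V n : Pk (vandermonde n).
Proof.
move=> k p; rewrite VD -(Pk_det n k p); apply: eq_bigr => S _; by rewrite VD.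
Qed.


Section Main.
Variables (n : nat) (hn : (1 <= n)%N) (r : 'I_n) (HA : Pk (alpha n)).

Let b p k := esym_shift_omit r p (alpha n) k.

Lemma F0 k : b 0 k = alpha n k.
Proof.
rewrite /b esym_eval (big_pred1 set0).
  congr (alpha n); apply: functional_extensionality => j.
  by rewrite /addS in_set0.
move=> S /=; rewrite cards_eq0; case: eqP => [->|]; first by rewrite in_set0.
by rewrite andbF.
Qed.

Lemma F2 p k : (n <= p)%N -> b p k = 0.
Proof.
move=> np; rewrite /b esym_eval big_pred0 // => S.
apply/negbTE/negP => /andP [rS /eqP cS].
have : S \proper [set: 'I_n].
  rewrite properT; apply/eqP => E; by rewrite E in_setT in rS.
move/proper_card; rewrite cardsT card_ord cS => lt.
by move: (leq_trans lt np); rewrite ltnn.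
Qed.

Lemma F3 p k : b p.+1 k + b p (ek k r 1) = 'C(n, p.+1)%:R * alpha n k.
Proof.
rewrite -(HA k p.+1) (bigID (fun S : {set 'I_n} => r \in S)) /= addrC; congr (_ + _).
  rewrite /b esym_eval; apply: eq_bigl => S; by rewrite andbC.
rewrite /b esym_eval.
rewrite [RHS](reindex_onto (fun S' => r |: S') (fun S => S :\ r)) /=; last first.
  by move=> S /andP [_ rS]; rewrite setD1K.
apply: eq_big => S'.
  case: (boolP (r \in S')) => hr /=.
    have -> : ((r |: S') :\ r == S') = false.
      apply/negbTE/eqP => E; move: hr; rewrite -E.
      by rewrite !inE eqxx.
    by rewrite !andbF.
  by rewrite setU1K // cardsU1 hr add1n eqSS setU11 eqxx !andbT.
move=> /andP [hr _].
congr (alpha n); apply: functional_extensionality => j.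
rewrite /addS /ek in_setU1; case: (eqVneq j r) => [->|] /=.
  by rewrite (negbTE hr).
by case: (j \in S').
Qed.

Let T (z : int) k := \sum_(p < n.+1) cc n p z * b p k.

Lemma T_step z k : T (z + 1) k = T z (ek k r 1).
Proof.
rewrite /T.
have Hb : forall p, b p (ek k r 1) = 'C(n, p.+1)%:R * alpha n k - b p.+1 k.
  by move=> p; rewrite -F3; ring.
under [RHS]eq_bigr => p _ do rewrite Hb mulrBr mulrA.
rewrite sumrB -mulr_suml binom_id //.
rewrite big_ord_recl F0 [X in _ = _ - X]big_ord_recr /= F2 // mulr0 addr0.
rewrite -sumrN; congr (_ + _); apply: eq_bigr => i _.
rewrite /bump /= /cc exprS.
have -> : ((n%:Z - 1 - (1 + i)%N%:Z + (z + 1))%:~R : rat) = (n%:Z - 1 - i%:Z + z)%:~R.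
  by congr intmul; rewrite PoszD; ring.
ring.
Qed.


Lemma ek0 k : ek k r 0 = k.
Proof. apply: functional_extensionality => j; rewrite /ek; case: (j == r) => //; exact: addr0. Qed.

Lemma ek_comp k c d : ek (ek k r c) r d = ek k r (c + d).
Proof.
apply: functional_extensionality => j; rewrite /ek.
case: (j == r) => //; by rewrite addrA.
Qed.

Lemma T0 k : T 0 k = alpha n k.
Proof.
rewrite /T big_ord_recl F0 /cc expr0 mul1r.
have -> : ((n%:Z - 1 - 0%:Z + 0)%:~R : rat) = (n.-1)%:R.
  have -> : (n%:Z - 1 - 0%:Z + 0) = Posz n.-1 by lia.
  by [].
rewrite gbinom_nn mul1r big1 ?addr0 // => i _.
rewrite /bump /=.
case: (ltnP i.+1 n) => h.
  have -> : ((n%:Z - 1 - (1 + i)%N%:Z + 0)%:~R : rat) = (n.-1 - i.+1)%N%:R.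
    have -> : (n%:Z - 1 - (1 + i)%N%:Z + 0) = Posz (n.-1 - i.+1) by lia.
    by [].
  by rewrite gbinom_small ?mulr0 ?mul0r //; lia.
by rewrite F2 ?mulr0 // add1n.
Qed.

Lemma T_alpha z k : alpha n (ek k r z) = T z k.
Proof.
have pos : forall (m : nat) k, alpha n (ek k r m%:Z) = T m%:Z k.
  elim=> [|m IH] k'; first by rewrite ek0 T0.
  have -> : (m.+1)%:Z = 1 + m%:Z by rewrite -add1n PoszD.
  by rewrite -ek_comp IH addrC T_step.
have neg : forall (m : nat) k, alpha n (ek k r (- m%:Z)) = T (- m%:Z) k.
  elim=> [|m IH] k'; first by rewrite oppr0 ek0 T0.
  have -> : - (m.+1)%:Z = -1 + - m%:Z by rewrite -addn1 PoszD; ring.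
  rewrite -ek_comp IH.
  have E := T_step (-1 + - m%:Z) (ek k' r (-1)).
  rewrite ek_comp addNr ek0 in E.
  have e2 : -1 + - m%:Z + 1 = - m%:Z by ring.
  by rewrite e2 in E.
case: z => m; first exact: pos.
by rewrite NegzE; apply: neg.
Qed.

End Main.


(* r is 0-indexed: r : 'I_n stands for the paper's index r+1 in 1..n.
   The sum over p >= 0 is truncated at p = n, since e_p of n-1 arguments
   vanishes for p > n-1 (our esym_shift_omit is defined for all p). *)
Theorem lemma1 (n : nat) (hn : (1 <= n)%N) (r : 'I_n) (z : int)
    (k : 'I_n -> int) :
  alpha n (fun j => if j == r then k j + z else k j) =
  \sum_(p < n.+1)
    (-1) ^+ p * gbinom ((n%:Z - 1 - p%:Z + z)%:~R) n.-1
      * esym_shift_omit r p (alpha n) k.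
Proof.
have H := (@T_alpha n hn r (Pk_alpha n (Pk_V n)) z k).
rewrite /ek /= in H.
exact H.
Qed.
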